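(* Let $d\ge1$ be an integer and $0<\lambda<1$. Let $\mathbf{v}(\cdot)=\{v_k(\cdot)\}_{k\ge0}$ be a solution, with $v_0(t)\equiv1$, of the differential system \[\frac{d}{dt}v_k(t)=\lambda(v_{k-1}(t)-v_k(t))-(1-v_{k+1}(t))^d+(1-v_{k}(t))^d,\qquad k=1,2,\dots\] with initial state $\mathbf{v}(0)\in U_o$. Then $\lim_{t\to\infty}v_k(t)=v^*_k$ for every $k=1,2,\dots$.
   Context: $U$ is the set of sequences $\mathbf{u}=\{u_k\}_{k\ge0}$ with $1=u_0\ge u_1\ge u_2\ge\cdots\ge 0$, and $U_o=\{\mathbf{u}\in U:\sum_{k\ge1}u_k<\infty\}$. The sequence $\mathbf{v}^*=\{v^*_k\}_{k\ge0}$ is defined by $v^*_0=1$ and $v^*_k=1-\sqrt[d]{1-\lambda v^*_{k-1}}$ for $k=1,2,\dots$. *)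

(* Defs.v *)
From Stdlib Require Import Reals.
From Coquelicot Require Import Coquelicot.
Open Scope R_scope.

Definition in_U (u : nat -> R) : Prop :=
  u 0%nat = 1 /\ (forall k, u (S k) <= u k) /\ (forall k, 0 <= u k).

Definition in_Uo (u : nat -> R) : Prop :=
  in_U u /\ ex_series (fun k => u (S k)).

Fixpoint vstar (d : nat) (lambda : R) (k : nat) : R :=
  match k with
  | O => 1
  | S k' => 1 - Rpower (1 - lambda * vstar d lambda k') (/ INR d)
  end.

(* Main.v *)
Require Import Defs.
From Stdlib Require Import Reals Lra Lia Psatz.
From Coquelicot Require Import Coquelicot.
Open Scope R_scope.
From Stdlib Require Import Classical.
Lemma pow_le1 (p : R) (n : nat) : 0 <= p <= 1 -> 0 <= p ^ n <= 1.
Proof. intros H; induction n; simpl; nra. Qed.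

Lemma pow_le_self (p : R) (n : nat) : (1 <= n)%nat -> 0 <= p <= 1 -> p ^ n <= p.
Proof. intros Hn H. destruct n; [lia|]. simpl. pose proof (pow_le1 p n H). nra. Qed.

Lemma root_props (d : nat) (y : R) : (1 <= d)%nat -> 0 < y <= 1 ->
  0 < Rpower y (/ INR d) <= 1 /\ (Rpower y (/ INR d)) ^ d = y.
Proof.
  intros Hd Hy. split; [split|].
  - apply exp_pos.
  - unfold Rpower. rewrite <- exp_0.
    destruct (Req_dec y 1) as [->|Hne].
    + rewrite ln_1, Rmult_0_r. lra.
    + left. apply exp_increasing.
      assert (ln y < 0) by (rewrite <- ln_1; apply ln_increasing; lra).
      assert (0 < / INR d) by (apply Rinv_0_lt_compat, lt_0_INR; lia).
      nra.
  - rewrite <- Rpower_pow by (apply exp_pos).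
    rewrite Rpower_mult. rewrite Rinv_l. apply Rpower_1; lra.
    apply not_0_INR; lia.
Qed.

Lemma vstar_props d lambda : (1 <= d)%nat -> 0 < lambda < 1 -> forall k,
  0 <= vstar d lambda k <= lambda ^ k /\
  (1 - vstar d lambda (S k)) ^ d = 1 - lambda * vstar d lambda k.
Proof.
  intros Hd Hl k. induction k as [|k IH].
  - simpl. split; [lra|].
    replace (1 - (1 - Rpower (1 - lambda * 1) (/ INR d))) with (Rpower (1 - lambda * 1) (/ INR d)) by ring.
    apply root_props; auto; lra.
  - destruct IH as [[H0 H1] _].
    assert (Hlk : lambda ^ k <= 1) by (apply pow_le1; lra).
    assert (Hy : 0 < 1 - lambda * vstar d lambda k <= 1) by nra.
    destruct (root_props d _ Hd Hy) as [Hp Hpd].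
    assert (Hsk : vstar d lambda (S k) = 1 - Rpower (1 - lambda * vstar d lambda k) (/ INR d)) by reflexivity.
    split.
    + rewrite Hsk.
      pose proof (pow_le_self (Rpower (1 - lambda * vstar d lambda k) (/ INR d)) d Hd ltac:(lra)).
      simpl. nra.
    + remember (S k) as m. simpl vstar at 1.
      replace (1 - (1 - Rpower (1 - lambda * vstar d lambda m) (/ INR d))) with (Rpower (1 - lambda * vstar d lambda m) (/ INR d)) by ring.
      apply root_props; auto.
      assert (0 <= vstar d lambda m <= 1).
      { subst m. rewrite Hsk. pose proof (pow_le_self (Rpower (1 - lambda * vstar d lambda k) (/ INR d)) d Hd ltac:(lra)). nra. }
      nra.
Qed.

Lemma pow_mono' (a b : R) n : 0 <= b <= a -> b ^ n <= a ^ n.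
Proof. intros H. apply pow_incr; lra. Qed.

Lemma pow_diff_upper (a b : R) n : 0 <= a <= 1 -> 0 <= b <= 1 ->
  Rabs (a ^ n - b ^ n) <= INR n * Rabs (a - b).
Proof.
  intros Ha Hb. induction n.
  - simpl. rewrite Rminus_diag, Rabs_R0. lra.
  - rewrite S_INR. simpl.
    replace (a * a ^ n - b * b ^ n) with (a * (a ^ n - b ^ n) + (a - b) * b ^ n) by ring.
    pose proof (pow_le1 b n Hb).
    eapply Rle_trans. apply Rabs_triang.
    rewrite !Rabs_mult.
    rewrite (Rabs_right a) by lra. rewrite (Rabs_right (b ^ n)) by lra.
    pose proof (Rabs_pos (a ^ n - b ^ n)). pose proof (Rabs_pos (a - b)).
    nra.
Qed.

Lemma pow_diff_lower (a b : R) n : 0 <= b <= a ->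
  (a - b) ^ n <= a ^ n - b ^ n \/ n = 0%nat.
Proof.
  intros H. destruct n; [right; reflexivity|left].
  induction n.
  - simpl. lra.
  - pose proof IHn as IH.
    change ((a - b) * (a - b) ^ S n <= a * a ^ S n - b * b ^ S n).
    replace (a * a ^ S n - b * b ^ S n) with (a * (a ^ S n - b ^ S n) + (a - b) * b ^ S n) by ring.
    assert (0 <= b ^ S n) by (apply pow_le; lra).
    assert (0 <= (a-b) ^ S n) by (apply pow_le; lra).
    nra.
Qed.

Fixpoint psum (f : nat -> R) (N : nat) : R :=
  match N with O => 0 | S n => psum f n + f (S n) end.

Lemma psum_le f g N : (forall k, (1 <= k <= N)%nat -> f k <= g k) -> psum f N <= psum g N.
Proof.
  induction N; intros H; simpl; [lra|].
  assert (psum f N <= psum g N) by (apply IHN; intros; apply H; lia).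
  assert (f (S N) <= g (S N)) by (apply H; lia). lra.
Qed.

Lemma psum_ext f g N : (forall k, (1 <= k <= N)%nat -> f k = g k) -> psum f N = psum g N.
Proof.
  induction N; intros H; simpl; [lra|].
  rewrite IHN by (intros; apply H; lia). rewrite H by lia. reflexivity.
Qed.

Lemma psum_tele (a : nat -> R) N : psum (fun k => a (k - 1)%nat - a k) N = a 0%nat - a N.
Proof.
  induction N; simpl; [ring|]. rewrite IHN. rewrite Nat.sub_0_r. ring.
Qed.

Lemma is_derive_psum (F dF : nat -> R -> R) (t : R) N :
  (forall k, (1 <= k <= N)%nat -> is_derive (F k) t (dF k t)) ->
  is_derive (fun s => psum (fun k => F k s) N) t (psum (fun k => dF k t) N).
Proof.
  induction N; intros H; simpl.
  - apply (is_derive_const (K:=R_AbsRing) (V:=R_NormedModule) (0:R)). 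
  - apply (is_derive_plus (fun s => psum (fun k => F k s) N) (F (S N))).
    + apply IHN; intros; apply H; lia.
    + apply H; lia.
Qed.

Lemma mvt_le (f df : R -> R) (a b M : R) : a <= b ->
  (forall t, a <= t <= b -> is_derive f t (df t)) ->
  (forall t, a <= t <= b -> df t <= M) -> f b - f a <= M * (b - a).
Proof.
  intros Hab Hd HM. destruct (Req_dec a b) as [->|Hne]; [lra|].
  destruct (MVT_gen f a b df) as [c [Hc Heq]].
  - intros x Hx. rewrite Rmin_left in Hx by lra. rewrite Rmax_right in Hx by lra.
    apply Hd; lra.
  - intros x Hx. rewrite Rmin_left in Hx by lra. rewrite Rmax_right in Hx by lra.
    apply continuity_pt_filterlim. apply (ex_derive_continuous (K:=R_AbsRing) (V:=R_NormedModule) f x).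
    eexists. apply Hd; lra.
  - rewrite Rmin_left in Hc by lra. rewrite Rmax_right in Hc by lra.
    rewrite Heq. apply Rmult_le_compat_r; [lra|]. apply HM; lra.
Qed.

Lemma mvt_ge (f df : R -> R) (a b M : R) : a <= b ->
  (forall t, a <= t <= b -> is_derive f t (df t)) ->
  (forall t, a <= t <= b -> M <= df t) -> M * (b - a) <= f b - f a.
Proof.
  intros Hab Hd HM.
  assert (H := mvt_le (fun t => - f t) (fun t => - df t) a b (- M) Hab).
  assert (- f b - - f a <= - M * (b - a)); [|lra].
  apply H.
  - intros t Ht. apply (is_derive_opp f). apply Hd; auto.
  - intros t Ht. specialize (HM t Ht). lra.
Qed.

Lemma le_eps (x y C : R) : (forall eps, 0 < eps -> x <= y + C * eps) -> x <= y.
Proof.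
  intros H. destruct (Rle_dec x y) as [|Hn]; [auto|].
  exfalso. set (C' := Rabs C + 1).
  assert (HC : 0 < C') by (unfold C'; pose proof (Rabs_pos C); lra).
  specialize (H ((x - y) / (2 * C'))).
  assert (0 < (x - y) / (2 * C')) by (apply Rdiv_lt_0_compat; lra).
  specialize (H H0).
  assert (C * ((x - y) / (2 * C')) <= C' * ((x - y) / (2 * C'))).
  { apply Rmult_le_compat_r; [lra|]. unfold C'. pose proof (Rle_abs C). lra. }
  assert (C' * ((x - y) / (2 * C')) = (x - y) / 2) by (field; lra).
  lra.
Qed.

Lemma mvt_rc (f df : R -> R) (a b M : R) : a < b ->
  (forall t, a < t <= b -> is_derive f t (df t)) ->
  (forall t, a < t <= b -> df t <= M) ->
  (forall eps, 0 < eps -> exists delta, 0 < delta /\ forall t, a < t < a + delta -> Rabs (f t - f a) < eps) ->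
  f b - f a <= M * (b - a).
Proof.
  intros Hab Hd HM Hc.
  apply (le_eps _ _ (Rabs M + 1)). intros eps Heps.
  destruct (Hc eps Heps) as [del [Hdel Ht]].
  set (a' := a + Rmin del (Rmin eps (b - a)) / 2).
  assert (Hm1 : Rmin del (Rmin eps (b - a)) <= del) by apply Rmin_l.
  assert (Hm2 : Rmin del (Rmin eps (b - a)) <= Rmin eps (b - a)) by apply Rmin_r.
  assert (Hm3 : Rmin eps (b - a) <= eps) by apply Rmin_l.
  assert (Hm4 : Rmin eps (b - a) <= b - a) by apply Rmin_r.
  assert (Hm5 : 0 < Rmin del (Rmin eps (b - a))).
  { apply Rmin_pos; [lra|]. apply Rmin_pos; lra. }
  assert (Ha' : a < a' < b) by (unfold a'; lra).
  assert (H1 : f b - f a' <= M * (b - a')).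
  { apply (mvt_le f df); [lra| |]; intros; [apply Hd|apply HM]; lra. }
  assert (H2 : Rabs (f a' - f a) < eps) by (apply Ht; unfold a'; lra).
  assert (H3 : M * (b - a') <= M * (b - a) + Rabs M * eps).
  { replace (M * (b - a')) with (M * (b - a) - M * (a' - a)) by ring.
    assert (Rabs (M * (a' - a)) <= Rabs M * eps).
    { rewrite Rabs_mult. apply Rmult_le_compat_l. apply Rabs_pos.
      rewrite Rabs_right by lra. unfold a'. lra. }
    pose proof (Rle_abs (- (M * (a' - a)))). rewrite Rabs_Ropp in H0. lra. }
  pose proof (Rle_abs (f a' - f a)). lra.
Qed.

Lemma sqrt_derive (eps x : R) : 0 < eps -> is_derive (fun y => sqrt (y ^ 2 + eps ^ 2)) x (x / sqrt (x^2 + eps^2)).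
Proof.
  intros He. assert (Hs : 0 < sqrt (x ^ 2 + eps ^ 2)) by (apply sqrt_lt_R0; nra).
  auto_derive. nra.
  replace (x * (x * 1) + eps * (eps * 1)) with (x ^ 2 + eps ^ 2) by ring.
  field. lra.
Qed.

Lemma sigma_props (eps e b dd : R) : 0 < eps -> 0 <= dd ->
  let r := sqrt (e ^ 2 + eps ^ 2) in
  Rabs e <= r <= Rabs e + eps /\ Rabs (e / r) <= 1 /\ e / r * e >= Rabs e - eps /\
  (b * e >= 0 -> Rabs b <= dd * Rabs e -> e / r * b >= Rabs b - dd * eps).
Proof.
  intros He Hdd r.
  assert (Hr2 : r * r = e ^ 2 + eps ^ 2) by (unfold r; apply sqrt_sqrt; nra).
  assert (Hr0 : 0 <= r) by (unfold r; apply sqrt_pos).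
  assert (Hre : Rabs e * Rabs e = e ^ 2) by (rewrite <- Rabs_mult; rewrite Rabs_right by nra; ring).
  pose proof (Rabs_pos e) as Hae.
  assert (Hr1 : Rabs e <= r) by nra.
  assert (Hr3 : r <= Rabs e + eps) by nra.
  assert (Hrp : 0 < r) by nra.
  split; [lra|]. split.
  - unfold Rdiv. rewrite Rabs_mult, Rabs_inv, (Rabs_right r) by lra.
    apply (Rmult_le_reg_r r); [lra|]. rewrite Rmult_assoc, Rinv_l by lra. lra.
  - split.
    + replace (e / r * e) with (e ^ 2 / r) by (field; lra).
      apply Rle_ge. apply (Rmult_le_reg_r r); [lra|]. unfold Rdiv. rewrite Rmult_assoc, Rinv_l by lra.
      nra.
    + intros Hbe Hb.
      pose proof (Rabs_pos b) as Hab.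
      assert (Heb : e * b = Rabs e * Rabs b).
      { rewrite <- Rabs_mult. rewrite Rabs_right; [ring|nra]. }
      replace (e / r * b) with (Rabs e * Rabs b / r) by (rewrite <- Heb; field; lra).
      apply Rle_ge. apply (Rmult_le_reg_r r); [lra|]. unfold Rdiv. rewrite Rmult_assoc, Rinv_l by lra.
      assert (Rabs b * (r - Rabs e) <= dd * Rabs e * (r - Rabs e)) by nra.
      assert (dd * Rabs e * (r - Rabs e) <= dd * Rabs e * eps).
      { apply Rmult_le_compat_l; [nra|lra]. }
      assert (dd * Rabs e * eps <= dd * eps * r).
      { assert (0 <= dd * eps) by (apply Rmult_le_pos; lra).
        replace (dd * Rabs e * eps) with (dd * eps * Rabs e) by ring.
        apply Rmult_le_compat_l; lra. }
      nra.
Qed.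

Lemma tele_ineq (s e b : nat -> R) lam dd eps N : 0 <= lam -> e 0%nat = 0 ->
  (forall k, (1 <= k <= N)%nat -> Rabs (s k) <= 1 /\ s k * e k >= Rabs (e k) - eps /\ s k * b k >= Rabs (b k) - dd * eps) ->
  psum (fun k => s k * (lam * (e (k - 1)%nat - e k) + b (S k) - b k)) N
   <= - lam * Rabs (e N) + Rabs (b (S N)) - Rabs (b 1%nat) + INR N * eps * (lam + dd).
Proof.
  intros Hl He0 H. induction N.
  - simpl. rewrite He0, Rabs_R0. lra.
  - simpl psum. rewrite S_INR.
    assert (IH := IHN (fun k Hk => H k ltac:(lia))).
    destruct (H (S N) ltac:(lia)) as [Hs [Hse Hsb]].
    rewrite ?Nat.sub_0_r.
    assert (H1 : s (S N) * e N <= Rabs (e N)).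
    { eapply Rle_trans. apply Rle_abs. rewrite Rabs_mult. pose proof (Rabs_pos (e N)). nra. }
    assert (H2 : s (S N) * b (S (S N)) <= Rabs (b (S (S N)))).
    { eapply Rle_trans. apply Rle_abs. rewrite Rabs_mult. pose proof (Rabs_pos (b (S (S N)))). nra. }
    assert (H3 : lam * (s (S N) * e N) <= lam * Rabs (e N)) by (apply Rmult_le_compat_l; lra).
    assert (H4 : lam * (Rabs (e (S N)) - eps) <= lam * (s (S N) * e (S N))) by (apply Rmult_le_compat_l; lra).
    replace (s (S N) * (lam * (e N - e (S N)) + b (S (S N)) - b (S N))) with
      (lam * (s (S N) * e N) - lam * (s (S N) * e (S N)) + s (S N) * b (S (S N)) - s (S N) * b (S N)) by ring.
    replace ((INR N + 1) * eps * (lam + dd)) with (INR N * eps * (lam+dd) + lam*eps + dd*eps) by ring.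
    replace (lam * (Rabs (e (S N)) - eps)) with (lam * Rabs (e (S N)) - lam * eps) in H4 by ring.
    lra.
Qed.

Lemma abs_le_inv x b : Rabs x <= b -> -b <= x <= b.
Proof. intros H. unfold Rabs in H. destruct (Rcase_abs x); lra. Qed.

Definition DD d lambda (v : nat -> R -> R) k t :=
  lambda * (v (k - 1)%nat t - v k t) - (1 - v (S k) t) ^ d + (1 - v k t) ^ d.

Record Sys d lambda (v : nat -> R -> R) : Prop := mkSys {
  s_d : (1 <= d)%nat;
  s_lam : 0 < lambda < 1;
  s_v0 : forall t, 0 <= t -> v 0%nat t = 1;
  s_state : forall t, 0 <= t -> in_U (fun k => v k t);
  s_init : in_Uo (fun k => v k 0);
  s_cont0 : forall k, filterlim (v k) (at_right 0) (locally (v k 0));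
  s_ode : forall k t, (1 <= k)%nat -> 0 < t -> is_derive (v k) t (DD d lambda v k t) }.

Lemma vmono d lambda v (HS : Sys d lambda v) t k m : 0 <= t -> (k <= m)%nat -> v m t <= v k t.
Proof.
  intros Ht Hkm. destruct (s_state _ _ _ HS t Ht) as [_ [Hm _]].
  induction Hkm; [lra|]. specialize (Hm m). simpl in Hm. lra.
Qed.

Lemma vb d lambda v (HS : Sys d lambda v) t k : 0 <= t -> 0 <= v k t <= 1.
Proof.
  intros Ht. destruct (s_state _ _ _ HS t Ht) as [H0 [_ Hp]]. simpl in *.
  split; [apply Hp|]. rewrite <- H0. apply (vmono _ _ _ HS); auto; lia.
Qed.

Lemma Dbound d lambda v (HS : Sys d lambda v) k t : (1 <= k)%nat -> 0 <= t ->
  Rabs (DD d lambda v k t) <= 1 /\ DD d lambda v k t <= lambda * (v (k - 1)%nat t - v k t).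
Proof.
  intros Hk Ht. unfold DD.
  pose proof (vb _ _ _ HS t (S k) Ht) as V1. pose proof (vb _ _ _ HS t k Ht) as V2.
  pose proof (vb _ _ _ HS t (k-1) Ht) as V3.
  assert (H1 : v (S k) t <= v k t) by (apply (vmono _ _ _ HS); auto).
  assert (H2 : v k t <= v (k-1)%nat t) by (apply (vmono _ _ _ HS); auto; lia).
  assert (H3 : (1 - v k t) ^ d <= (1 - v (S k) t) ^ d) by (apply pow_incr; lra).
  assert (H4 : 0 <= (1 - v k t) ^ d) by (apply pow_le; lra).
  assert (H5 : (1 - v (S k) t) ^ d <= 1) by (apply pow_le1; lra).
  pose proof (s_lam _ _ _ HS) as HL.
  assert (0 <= lambda * (v (k - 1)%nat t - v k t) <= lambda) by nra.
  split; [|lra]. apply Rabs_le. lra.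
Qed.

Lemma vlip d lambda v (HS : Sys d lambda v) k s t : 0 < s -> 0 < t ->
  Rabs (v k t - v k s) <= Rabs (t - s).
Proof.
  intros Hs Ht. destruct k as [|k].
  - rewrite !(s_v0 _ _ _ HS) by lra. rewrite Rminus_diag, Rabs_R0. apply Rabs_pos.
  - assert (W : forall s t, 0 < s -> s <= t -> Rabs (v (S k) t - v (S k) s) <= t - s).
    { clear s t Hs Ht. intros s t Hs Hst. apply Rabs_le. split.
    + assert (H := mvt_ge (v (S k)) (DD d lambda v (S k)) s t (-1) Hst).
      assert (-1 * (t - s) <= v (S k) t - v (S k) s); [|lra].
      apply H; intros r Hr.
      * apply (s_ode _ _ _ HS); lia || lra.
      * destruct (Dbound _ _ _ HS (S k) r ltac:(lia) ltac:(lra)) as [Hb _].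
        apply abs_le_inv in Hb. lra.
    + assert (H := mvt_le (v (S k)) (DD d lambda v (S k)) s t 1 Hst).
      assert (v (S k) t - v (S k) s <= 1 * (t - s)); [|lra].
      apply H; intros r Hr.
      * apply (s_ode _ _ _ HS); lia || lra.
      * destruct (Dbound _ _ _ HS (S k) r ltac:(lia) ltac:(lra)) as [Hb _].
        apply abs_le_inv in Hb. lra. }
    destruct (Rle_dec s t).
    + rewrite (Rabs_right (t - s)) by lra. apply W; lra.
    + rewrite Rabs_minus_sym, (Rabs_minus_sym t), (Rabs_right (s - t)) by lra. apply W; lra.
Qed.
Lemma rc_extract (f : R -> R) l : filterlim f (at_right 0) (locally l) ->
  forall eps, 0 < eps -> exists delta, 0 < delta /\ forall t, 0 < t < 0 + delta -> Rabs (f t - l) < eps.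
Proof.
  intros H eps He. apply filterlim_locally with (eps := mkposreal eps He) in H.
  destruct H as [del Hd]. exists del. split; [apply cond_pos|].
  intros t Ht. apply (Hd t). 
  - unfold ball; simpl. unfold AbsRing_ball, abs, minus, plus, opp; simpl. rewrite Ropp_0, Rplus_0_r, Rabs_right; lra.
  - lra.
Qed.

Lemma psum_rc d lambda v (HS : Sys d lambda v) N :
  forall eps, 0 < eps -> exists delta, 0 < delta /\ forall t, 0 < t < 0 + delta ->
   Rabs (psum (fun k => v k t) N - psum (fun k => v k 0) N) < eps.
Proof.
  induction N; intros eps He.
  - exists 1. split; [lra|]. intros t _. simpl. rewrite Rminus_diag, Rabs_R0. lra.
  - destruct (IHN (eps/2) ltac:(lra)) as [d1 [Hd1 H1]].
    destruct (rc_extract _ _ (s_cont0 _ _ _ HS (S N)) (eps/2) ltac:(lra)) as [d2 [Hd2 H2]].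
    exists (Rmin d1 d2). split; [apply Rmin_pos; lra|].
    intros t Ht. pose proof (Rmin_l d1 d2). pose proof (Rmin_r d1 d2).
    simpl. specialize (H1 t ltac:(lra)). specialize (H2 t ltac:(lra)).
    replace (psum (fun k => v k t) N + v (S N) t - (psum (fun k => v k 0) N + v (S N) 0))
      with ((psum (fun k => v k t) N - psum (fun k => v k 0) N) + (v (S N) t - v (S N) 0)) by ring.
    eapply Rle_lt_trans. apply Rabs_triang. lra.
Qed.

Lemma psum_sum_f (f : nat -> R) N : psum f (S N) = sum_f_R0 (fun k => f (S k)) N.
Proof. induction N; simpl; [ring|]. simpl in IHN. rewrite <- IHN. ring. Qed.

Definition S0 (v : nat -> R -> R) := Series (fun k => v (S k) 0).

Lemma G0_bound d lambda v (HS : Sys d lambda v) N : psum (fun k => v k 0) N <= S0 v.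
Proof.
  destruct (s_init _ _ _ HS) as [HU Hser].
  destruct HU as [_ [_ Hpos]]. simpl in Hpos.
  assert (Hcv := Series_correct _ Hser).
  destruct (ex_series_Reals_0 _ Hser) as [l Hl].
  assert (Hleq : forall n, sum_f_R0 (fun k => v (S k) 0) n <= l).
  { apply growing_ineq; auto. intro n. simpl. pose proof (Hpos (S (S n))). lra. }
  assert (Hl' : l = S0 v).
  { unfold S0. symmetry. apply is_series_unique. apply is_series_Reals. exact Hl. }
  rewrite <- Hl'.
  destruct N.
  - simpl. specialize (Hleq 0%nat). simpl in Hleq. pose proof (Hpos 1%nat). lra.
  - rewrite psum_sum_f. apply Hleq.
Qed.

Lemma psum_const c N : psum (fun _ => c) N = INR N * c.
Proof. induction N; simpl psum; [simpl; ring|]. rewrite IHN, S_INR. ring. Qed.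

Lemma Gbound d lambda v (HS : Sys d lambda v) N t : 0 < t -> INR N * v N t <= S0 v + t.
Proof.
  intros Ht.
  assert (H1 : INR N * v N t <= psum (fun k => v k t) N).
  { rewrite <- psum_const. apply psum_le. intros k Hk. apply (vmono _ _ _ HS); lia || lra. }
  assert (H2 : psum (fun k => v k t) N - psum (fun k => v k 0) N <= 1 * (t - 0)).
  { apply (mvt_rc (fun s => psum (fun k => v k s) N) (fun s => psum (fun k => DD d lambda v k s) N)); [lra| | |].
    - intros s Hs. apply is_derive_psum. intros k Hk. apply (s_ode _ _ _ HS); lia || lra.
    - intros s Hs. eapply Rle_trans.
      apply (psum_le _ (fun k => lambda * v (k - 1)%nat s - lambda * v k s)).
      { intros k Hk. destruct (Dbound _ _ _ HS k s ltac:(lia) ltac:(lra)). lra. }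
      rewrite (psum_tele (fun k => lambda * v k s)).
      pose proof (vb _ _ _ HS s N ltac:(lra)). rewrite (s_v0 _ _ _ HS) by lra.
      pose proof (s_lam _ _ _ HS). nra.
    - apply (psum_rc _ _ _ HS). }
  pose proof (G0_bound _ _ _ HS N). lra.
Qed.

Definition ee d lambda (v : nat -> R -> R) k t := v k t - vstar d lambda k.
Definition bb d lambda (v : nat -> R -> R) k t := (1 - vstar d lambda k) ^ d - (1 - v k t) ^ d.

Lemma vstar01 d lambda v (HS : Sys d lambda v) k : 0 <= vstar d lambda k <= 1.
Proof.
  destruct (vstar_props d lambda (s_d _ _ _ HS) (s_lam _ _ _ HS) k) as [[H1 H2] _].
  pose proof (pow_le1 lambda k). pose proof (s_lam _ _ _ HS). split; [lra|].
  assert (lambda ^ k <= 1) by (apply pow_le1; lra). lra.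
Qed.

Lemma DD_decomp d lambda v (HS : Sys d lambda v) k t : (1 <= k)%nat ->
  DD d lambda v k t = lambda * (ee d lambda v (k - 1)%nat t - ee d lambda v k t)
     + bb d lambda v (S k) t - bb d lambda v k t.
Proof.
  intros Hk. unfold DD, ee, bb.
  destruct (vstar_props d lambda (s_d _ _ _ HS) (s_lam _ _ _ HS) k) as [_ E1].
  destruct (vstar_props d lambda (s_d _ _ _ HS) (s_lam _ _ _ HS) (k - 1)) as [_ E2].
  replace (S (k - 1)) with k in E2 by lia.
  rewrite E1, E2. ring.
Qed.

Lemma ee0 d lambda v (HS : Sys d lambda v) t : 0 <= t -> ee d lambda v 0 t = 0.
Proof. intros Ht. unfold ee. rewrite (s_v0 _ _ _ HS) by lra. simpl. ring. Qed.

Lemma bb_props d lambda v (HS : Sys d lambda v) k t : 0 <= t ->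
  bb d lambda v k t * ee d lambda v k t >= 0 /\
  Rabs (bb d lambda v k t) <= INR d * Rabs (ee d lambda v k t) /\
  Rabs (ee d lambda v k t) ^ d <= Rabs (bb d lambda v k t).
Proof.
  intros Ht. pose proof (vstar01 _ _ _ HS k) as Hs. pose proof (vb _ _ _ HS t k Ht) as Hv.
  pose proof (s_d _ _ _ HS) as Hd.
  unfold bb, ee. split; [|split].
  - destruct (Rle_dec (v k t) (vstar d lambda k)).
    + assert ((1 - vstar d lambda k) ^ d <= (1 - v k t) ^ d) by (apply pow_incr; lra). nra.
    + assert ((1 - v k t) ^ d <= (1 - vstar d lambda k) ^ d) by (apply pow_incr; lra). nra.
  - replace (v k t - vstar d lambda k) with ((1 - vstar d lambda k) - (1 - v k t)) by ring.
    apply pow_diff_upper; lra.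
  - destruct (Rle_dec (v k t) (vstar d lambda k)).
    + rewrite (Rabs_left1 (v k t - vstar d lambda k)) by lra.
      destruct (pow_diff_lower (1 - v k t) (1 - vstar d lambda k) d ltac:(lra)) as [H|H]; [|lia].
      assert ((1 - vstar d lambda k) ^ d <= (1 - v k t) ^ d) by (apply pow_incr; lra).
      rewrite Rabs_left1 by lra. replace (- (v k t - vstar d lambda k)) with (1 - v k t - (1 - vstar d lambda k)) by ring. lra.
    + rewrite (Rabs_right (v k t - vstar d lambda k)) by lra.
      destruct (pow_diff_lower (1 - vstar d lambda k) (1 - v k t) d ltac:(lra)) as [H|H]; [|lia].
      replace (v k t - vstar d lambda k) with (1 - vstar d lambda k - (1 - v k t)) by ring.
      assert (0 <= (1 - vstar d lambda k - (1 - v k t)) ^ d) by (apply pow_le; lra).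
      rewrite Rabs_right by lra. lra.
Qed.

Lemma psum_plus f g N : psum (fun k => f k + g k) N = psum f N + psum g N.
Proof. induction N; simpl; [ring|]. rewrite IHN. ring. Qed.

Definition Phi d lambda v N t := psum (fun k => Rabs (ee d lambda v k t)) N.
Definition Fe d lambda v N eps t := psum (fun k => sqrt ((ee d lambda v k t) ^ 2 + eps ^ 2)) N.

Lemma Fe_derive d lambda v (HS : Sys d lambda v) N eps t : 0 < eps -> 0 < t ->
  is_derive (Fe d lambda v N eps) t
    (psum (fun k => ee d lambda v k t / sqrt ((ee d lambda v k t) ^ 2 + eps ^ 2) * DD d lambda v k t) N).
Proof.
  intros He Ht. unfold Fe.
  apply (is_derive_psum (fun k s => sqrt ((ee d lambda v k s) ^ 2 + eps ^ 2))
          (fun k s => ee d lambda v k s / sqrt ((ee d lambda v k s) ^ 2 + eps ^ 2) * DD d lambda v k s)).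
  intros k Hk.
  assert (Hg : is_derive (ee d lambda v k) t (DD d lambda v k t)).
  { unfold ee. replace (DD d lambda v k t) with (DD d lambda v k t - 0) by ring.
    apply (is_derive_minus (v k) (fun _ => vstar d lambda k)).
    - apply (s_ode _ _ _ HS); lia || lra.
    - apply (is_derive_const (K:=R_AbsRing) (V:=R_NormedModule)). }
  pose proof (is_derive_comp (fun y => sqrt (y ^ 2 + eps ^ 2)) (ee d lambda v k) t _ _
     (sqrt_derive eps (ee d lambda v k t) He) Hg) as Hc.
  simpl in Hc. unfold scal in Hc; simpl in Hc. unfold mult in Hc; simpl in Hc.
  rewrite Rmult_comm. exact Hc.
Qed.

Lemma phi_step d lambda v (HS : Sys d lambda v) N a b beta gamma : 0 < a <= b ->
  (forall t, a <= t <= b -> INR d * Rabs (ee d lambda v (S N) t) <= beta /\ gamma <= Rabs (bb d lambda v 1 t)) ->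
  Phi d lambda v N b <= Phi d lambda v N a + (beta - gamma) * (b - a).
Proof.
  intros Hab H. pose proof (s_lam _ _ _ HS) as HL.
  apply (le_eps _ _ (INR N * (lambda + INR d) * (b - a) + INR N)).
  intros eps He.
  assert (H1 : Fe d lambda v N eps b - Fe d lambda v N eps a <= (beta - gamma + INR N * eps * (lambda + INR d)) * (b - a)).
  { apply (mvt_le (Fe d lambda v N eps) (fun t => psum (fun k => ee d lambda v k t / sqrt ((ee d lambda v k t) ^ 2 + eps ^ 2) * DD d lambda v k t) N) a b _ ltac:(lra)).
    - intros t Ht. apply (Fe_derive _ _ _ HS); lra.
    - intros t Ht.
      rewrite (psum_ext _ (fun k => ee d lambda v k t / sqrt ((ee d lambda v k t) ^ 2 + eps ^ 2) *
          (lambda * (ee d lambda v (k - 1)%nat t - ee d lambda v k t) + bb d lambda v (S k) t - bb d lambda v k t))).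
      2: { intros k Hk. rewrite (DD_decomp _ _ _ HS) by lia. reflexivity. }
      eapply Rle_trans.
      apply (tele_ineq (fun k => ee d lambda v k t / sqrt ((ee d lambda v k t) ^ 2 + eps ^ 2))
               (fun k => ee d lambda v k t) (fun k => bb d lambda v k t) lambda (INR d) eps N).
      + lra.
      + apply (ee0 _ _ _ HS); lra.
      + intros k Hk. destruct (sigma_props eps (ee d lambda v k t) (bb d lambda v k t) (INR d) He (pos_INR d))
           as [_ [S1 [S2 S3]]].
        destruct (bb_props _ _ _ HS k t ltac:(lra)) as [B1 [B2 _]].
        split; [exact S1|split; [exact S2|]]. apply S3; auto.
      + destruct (H t Ht) as [Hb1 Hb2].
        destruct (bb_props _ _ _ HS (S N) t ltac:(lra)) as [_ [B2 _]].
        pose proof (Rabs_pos (ee d lambda v N t)).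
        assert (0 <= lambda * Rabs (ee d lambda v N t)) by (apply Rmult_le_pos; lra).
        lra. }
  assert (H2 : Phi d lambda v N b <= Fe d lambda v N eps b).
  { apply psum_le. intros k Hk.
    destruct (sigma_props eps (ee d lambda v k b) 0 0 He ltac:(lra)) as [[S1 _] _]. exact S1. }
  assert (H3 : Fe d lambda v N eps a <= Phi d lambda v N a + INR N * eps).
  { unfold Phi. rewrite <- psum_const, <- psum_plus. apply psum_le. intros k Hk.
    destruct (sigma_props eps (ee d lambda v k a) 0 0 He ltac:(lra)) as [[_ S1] _]. exact S1. }
  assert (H4 : (beta - gamma + INR N * eps * (lambda + INR d)) * (b - a) =
      (beta - gamma) * (b - a) + (INR N * (lambda + INR d) * (b - a)) * eps) by ring.
  assert (H5 : INR N * eps = INR N * eps) by reflexivity.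
  nra.
Qed.

Definition conv (f : R -> R) (l : R) := forall eps, 0 < eps -> exists T, forall t, T <= t -> Rabs (f t - l) < eps.

Lemma Gsum d lambda v (HS : Sys d lambda v) N t : 0 < t -> psum (fun k => v k t) N <= S0 v + t.
Proof.
  intros Ht.
  assert (H2 : psum (fun k => v k t) N - psum (fun k => v k 0) N <= 1 * (t - 0)).
  { apply (mvt_rc (fun s => psum (fun k => v k s) N) (fun s => psum (fun k => DD d lambda v k s) N)); [lra| | |].
    - intros s Hs. apply is_derive_psum. intros k Hk. apply (s_ode _ _ _ HS); lia || lra.
    - intros s Hs. eapply Rle_trans.
      apply (psum_le _ (fun k => lambda * v (k - 1)%nat s - lambda * v k s)).
      { intros k Hk. destruct (Dbound _ _ _ HS k s ltac:(lia) ltac:(lra)). lra. }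
      rewrite (psum_tele (fun k => lambda * v k s)).
      pose proof (vb _ _ _ HS s N ltac:(lra)). rewrite (s_v0 _ _ _ HS) by lra.
      pose proof (s_lam _ _ _ HS). nra.
    - apply (psum_rc _ _ _ HS). }
  pose proof (G0_bound _ _ _ HS N). lra.
Qed.

Lemma geom_psum lambda N : 0 < lambda < 1 -> psum (fun k => lambda ^ k) N <= 1 / (1 - lambda).
Proof.
  intros Hl.
  assert (E : (1 - lambda) * psum (fun k => lambda ^ k) N = lambda - lambda ^ (S N)).
  { induction N; simpl psum; [simpl; ring|]. rewrite Rmult_plus_distr_l, IHN. simpl. ring. }
  assert (0 <= lambda ^ S N) by (apply pow_le; lra).
  apply (Rmult_le_reg_l (1 - lambda)); [lra|]. rewrite E. field_simplify; lra.
Qed.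

Lemma Phi_bound d lambda v (HS : Sys d lambda v) N :
  Phi d lambda v N 1 <= S0 v + 1 + 1 / (1 - lambda).
Proof.
  pose proof (s_lam _ _ _ HS) as HL.
  assert (Phi d lambda v N 1 <= psum (fun k => v k 1) N + psum (fun k => lambda ^ k) N).
  { unfold Phi. rewrite <- psum_plus. apply psum_le. intros k Hk. unfold ee.
    pose proof (vb _ _ _ HS 1 k ltac:(lra)).
    destruct (vstar_props d lambda (s_d _ _ _ HS) HL k) as [[H1 H2] _].
    unfold Rabs; destruct (Rcase_abs _); lra. }
  pose proof (Gsum _ _ _ HS N 1 ltac:(lra)). pose proof (geom_psum lambda N HL). lra.
Qed.

Lemma Phi_nonneg d lambda v N t : 0 <= Phi d lambda v N t.
Proof.
  unfold Phi. rewrite <- (Rmult_0_r (INR N)), <- psum_const. apply psum_le.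
  intros; apply Rabs_pos.
Qed.

Lemma conv1 d lambda v (HS : Sys d lambda v) : conv (v 1%nat) (vstar d lambda 1).
Proof.
  intros eta Heta.
  pose proof (s_lam _ _ _ HS) as HL. pose proof (s_d _ _ _ HS) as Hd.
  set (w := eta / 2). set (c := (eta / 2) ^ d).
  assert (Hc : 0 < c) by (apply pow_lt; lra).
  apply NNPP. intro Hno.
  assert (Hbad : forall T, exists t, T <= t /\ eta <= Rabs (v 1%nat t - vstar d lambda 1)).
  { intros T. apply NNPP. intro Hn. apply Hno. exists T. intros t Ht.
    apply Rnot_le_lt. intro Hle. apply Hn. exists t. split; auto. }
  assert (Hint : forall t s, 1 <= t -> eta <= Rabs (v 1%nat t - vstar d lambda 1) -> t <= s <= t + w ->
     c <= Rabs (bb d lambda v 1 s)).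
  { intros t s Ht Hbt Hs.
    pose proof (vlip _ _ _ HS 1 t s ltac:(lra) ltac:(lra)) as Hl.
    rewrite (Rabs_right (s - t)) in Hl by lra.
    assert (Hes : eta / 2 <= Rabs (ee d lambda v 1 s)).
    { unfold ee. pose proof (Rabs_triang (v 1%nat s - vstar d lambda 1) (v 1%nat t - v 1%nat s)).
      replace (v 1%nat s - vstar d lambda 1 + (v 1%nat t - v 1%nat s)) with (v 1%nat t - vstar d lambda 1) in H by ring.
      rewrite Rabs_minus_sym in Hl. unfold w in Hs. lra. }
    destruct (bb_props _ _ _ HS 1 s ltac:(lra)) as [_ [_ B3]].
    eapply Rle_trans; [|exact B3]. unfold c. apply pow_incr. lra. }
  assert (P : forall j : nat, exists T, 1 <= T /\ forall N beta,
     (forall s, 1 <= s <= T -> INR d * Rabs (ee d lambda v (S N) s) <= beta) ->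
     Phi d lambda v N T <= Phi d lambda v N 1 + beta * (T - 1) - INR j * c * w).
  { induction j as [|j IH].
    - exists 1. split; [lra|]. intros N beta _. simpl. lra.
    - destruct IH as [T [HT IH]].
      destruct (Hbad T) as [t [Ht Hbt]].
      exists (t + w). split; [unfold w; lra|]. intros N beta Hb.
      assert (A0 := IH N beta (fun s Hs => Hb s ltac:(unfold w in *; lra))).
      assert (A1 : Phi d lambda v N t <= Phi d lambda v N T + (beta - 0) * (t - T)).
      { apply (phi_step _ _ _ HS); [lra|]. intros s Hs. split.
        - apply Hb. unfold w; lra.
        - apply Rabs_pos. }
      assert (A2 : Phi d lambda v N (t + w) <= Phi d lambda v N t + (beta - c) * (t + w - t)).
      { apply (phi_step _ _ _ HS); [unfold w; lra|]. intros s Hs. split.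
        - apply Hb. unfold w in *; lra.
        - apply (Hint t s); lra. }
      rewrite S_INR.
      replace ((INR j + 1) * c * w) with (INR j * c * w + c * w) by ring.
      replace ((beta - c) * (t + w - t)) with (beta * w - c * w) in A2 by ring.
      replace (beta * (t + w - 1)) with (beta * (T - 1) + beta * (t - T) + beta * w) by ring.
      replace ((beta - 0) * (t - T)) with (beta * (t - T)) in A1 by ring.
      lra. }
  set (B := S0 v + 1 + 1 / (1 - lambda)).
  assert (Hcw : c * w > 0) by (unfold w; apply Rmult_lt_0_compat; lra).
  destruct (INR_archimed (c * w) (B + 2) Hcw) as [K HK].
  destruct (P K) as [T [HT HPK]].
  set (beta := 1 / T).
  assert (Hbeta : 0 < beta) by (unfold beta; apply Rdiv_lt_0_compat; lra).
  assert (Hbt : beta * (T - 1) <= 1).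
  { unfold beta. replace (1 / T * (T - 1)) with (1 - 1 / T) by (field; lra).
    assert (0 < 1 / T) by (apply Rdiv_lt_0_compat; lra). lra. }
  assert (Hdpos : 0 < INR d) by (apply lt_0_INR; lia).
  set (q := beta / (2 * INR d)).
  assert (Hq : 0 < q) by (unfold q; apply Rdiv_lt_0_compat; lra).
  destruct (INR_archimed q (S0 v + T) Hq) as [N1 HN1].
  destruct (pow_lt_1_zero lambda ltac:(rewrite Rabs_right; lra) q Hq) as [N2 HN2].
  set (N := Nat.max N1 N2).
  assert (HNb : forall s, 1 <= s <= T -> INR d * Rabs (ee d lambda v (S N) s) <= beta).
  { intros s Hs.
    assert (E1 : INR (S N) * v (S N) s <= S0 v + s) by (apply (Gbound _ _ _ HS); lra).
    assert (E2 : INR N1 <= INR (S N)) by (apply le_INR; unfold N; lia).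
    assert (E3 : v (S N) s <= q).
    { pose proof (vb _ _ _ HS s (S N) ltac:(lra)).
      assert (INR N1 * v (S N) s <= INR (S N) * v (S N) s) by (apply Rmult_le_compat_r; lra).
      assert (INR N1 * v (S N) s <= S0 v + T) by lra.
      apply NNPP. intro Hn. apply Rnot_le_lt in Hn.
      assert (INR N1 * q <= INR N1 * v (S N) s) by (apply Rmult_le_compat_l; [apply pos_INR|lra]).
      lra. }
    assert (E4 : vstar d lambda (S N) <= q).
    { destruct (vstar_props d lambda Hd HL (S N)) as [[_ H1] _].
      specialize (HN2 (S N) ltac:(unfold N; lia)).
      rewrite Rabs_right in HN2 by (apply Rle_ge, pow_le; lra). lra. }
    assert (E5 : Rabs (ee d lambda v (S N) s) <= 2 * q).
    { unfold ee. pose proof (vb _ _ _ HS s (S N) ltac:(lra)).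
      pose proof (vstar01 _ _ _ HS (S N)). unfold Rabs; destruct (Rcase_abs _); lra. }
    assert (E6 : INR d * (2 * q) = beta) by (unfold q; field; lra).
    rewrite <- E6. apply Rmult_le_compat_l; lra. }
  pose proof (HPK N beta HNb) as Hfin.
  pose proof (Phi_bound _ _ _ HS N). pose proof (Phi_nonneg d lambda v N T).
  fold B in H. lra.
Qed.

Lemma barbalat (f df : R -> R) L M T0 : 0 < M ->
  (forall t, T0 < t -> is_derive f t (df t)) ->
  (forall s t, T0 < s -> T0 < t -> Rabs (df t - df s) <= M * Rabs (t - s)) ->
  conv f L -> conv df 0.
Proof.
  intros HM Hd Hl Hc eta Heta.
  set (del := eta / (2 * M)).
  assert (Hdel : 0 < del) by (unfold del; apply Rdiv_lt_0_compat; lra).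
  destruct (Hc (eta * del / 4)) as [T1 HT1].
  { apply Rmult_lt_0_compat; [apply Rmult_lt_0_compat|]; lra. }
  exists (Rmax T1 (T0 + 1)). intros t Ht.
  pose proof (Rmax_l T1 (T0 + 1)). pose proof (Rmax_r T1 (T0 + 1)).
  assert (Hf : Rabs (f (t + del) - f t) < eta * del / 2).
  { pose proof (HT1 t ltac:(lra)). pose proof (HT1 (t + del) ltac:(lra)).
    replace (f (t + del) - f t) with ((f (t + del) - L) - (f t - L)) by ring.
    eapply Rle_lt_trans. apply Rabs_triang. rewrite Rabs_Ropp. lra. }
  assert (HMd : M * del = eta / 2) by (unfold del; field; lra).
  assert (Hb : forall s, t <= s <= t + del -> Rabs (df s - df t) <= eta / 2).
  { intros s Hs. eapply Rle_trans. apply Hl; lra.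
    rewrite Rabs_right by lra. rewrite <- HMd. apply Rmult_le_compat_l; lra. }
  assert (U : f (t + del) - f t <= (df t + eta / 2) * (t + del - t)).
  { apply (mvt_le f df); [lra| |].
    - intros s Hs. apply Hd. lra.
    - intros s Hs. specialize (Hb s Hs). apply abs_le_inv in Hb. lra. }
  assert (Lo : (df t - eta / 2) * (t + del - t) <= f (t + del) - f t).
  { apply (mvt_ge f df); [lra| |].
    - intros s Hs. apply Hd. lra.
    - intros s Hs. specialize (Hb s Hs). apply abs_le_inv in Hb. lra. }
  replace (t + del - t) with del in U, Lo by ring.
  pose proof (Rle_abs (f (t + del) - f t)). pose proof (Rle_abs (- (f (t + del) - f t))).
  rewrite Rabs_Ropp in H2. rewrite Rminus_0_r.
  assert (df t * del < eta * del) by nra.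
  assert (- eta * del < df t * del) by nra.
  assert (df t < eta) by (apply (Rmult_lt_reg_r del); lra).
  assert (- eta < df t) by (apply (Rmult_lt_reg_r del); lra).
  unfold Rabs; destruct (Rcase_abs (df t)); lra.
Qed.

Lemma DD_lip d lambda v (HS : Sys d lambda v) k s t : (1 <= k)%nat -> 0 < s -> 0 < t ->
  Rabs (DD d lambda v k t - DD d lambda v k s) <= (2 * lambda + 2 * INR d) * Rabs (t - s).
Proof.
  intros Hk Hs Ht. pose proof (s_lam _ _ _ HS) as HL. unfold DD.
  pose proof (vlip _ _ _ HS (k - 1) s t Hs Ht) as L1.
  pose proof (vlip _ _ _ HS k s t Hs Ht) as L2.
  pose proof (vlip _ _ _ HS (S k) s t Hs Ht) as L3.
  assert (G2 : Rabs ((1 - v k t) ^ d - (1 - v k s) ^ d) <= INR d * Rabs (t - s)).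
  { eapply Rle_trans. apply pow_diff_upper.
    pose proof (vb _ _ _ HS t k ltac:(lra)); lra. pose proof (vb _ _ _ HS s k ltac:(lra)); lra.
    replace (1 - v k t - (1 - v k s)) with (- (v k t - v k s)) by ring. rewrite Rabs_Ropp.
    apply Rmult_le_compat_l; [apply pos_INR|exact L2]. }
  assert (G3 : Rabs ((1 - v (S k) t) ^ d - (1 - v (S k) s) ^ d) <= INR d * Rabs (t - s)).
  { eapply Rle_trans. apply pow_diff_upper.
    pose proof (vb _ _ _ HS t (S k) ltac:(lra)); lra. pose proof (vb _ _ _ HS s (S k) ltac:(lra)); lra.
    replace (1 - v (S k) t - (1 - v (S k) s)) with (- (v (S k) t - v (S k) s)) by ring. rewrite Rabs_Ropp.
    apply Rmult_le_compat_l; [apply pos_INR|exact L3]. }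
  assert (G1 : Rabs (lambda * (v (k - 1)%nat t - v k t) - lambda * (v (k - 1)%nat s - v k s)) <= 2 * lambda * Rabs (t - s)).
  { replace (lambda * (v (k - 1)%nat t - v k t) - lambda * (v (k - 1)%nat s - v k s))
      with (lambda * ((v (k - 1)%nat t - v (k - 1)%nat s) - (v k t - v k s))) by ring.
    rewrite Rabs_mult, Rabs_right by lra.
    replace (2 * lambda * Rabs (t - s)) with (lambda * (2 * Rabs (t - s))) by ring.
    apply Rmult_le_compat_l; [lra|].
    eapply Rle_trans. apply Rabs_triang. rewrite Rabs_Ropp. lra. }
  replace (lambda * (v (k - 1)%nat t - v k t) - (1 - v (S k) t) ^ d + (1 - v k t) ^ d -
     (lambda * (v (k - 1)%nat s - v k s) - (1 - v (S k) s) ^ d + (1 - v k s) ^ d))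
   with ((lambda * (v (k - 1)%nat t - v k t) - lambda * (v (k - 1)%nat s - v k s))
         - ((1 - v (S k) t) ^ d - (1 - v (S k) s) ^ d) + ((1 - v k t) ^ d - (1 - v k s) ^ d)) by ring.
  eapply Rle_trans. apply Rabs_triang. eapply Rle_trans. apply Rplus_le_compat_r. apply Rabs_triang.
  rewrite Rabs_Ropp. lra.
Qed.

Lemma conv_step d lambda v (HS : Sys d lambda v) k : (1 <= k)%nat ->
  conv (v (k - 1)%nat) (vstar d lambda (k - 1)) -> conv (v k) (vstar d lambda k) ->
  conv (v (S k)) (vstar d lambda (S k)).
Proof.
  intros Hk C1 C2. pose proof (s_lam _ _ _ HS) as HL. pose proof (s_d _ _ _ HS) as Hd.
  assert (Hdp : 1 <= INR d) by (apply (le_INR 1); lia).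
  assert (CD : conv (DD d lambda v k) 0).
  { apply (barbalat (v k) (DD d lambda v k) (vstar d lambda k) (2 * lambda + 2 * INR d) 0); [lra| | |auto].
    - intros t Ht. apply (s_ode _ _ _ HS); auto.
    - intros s t Hs Ht. apply (DD_lip _ _ _ HS); auto. }
  intros eta Heta.
  set (K := 2 * lambda + INR d + 1).
  assert (HK : 0 < K) by (unfold K; lra).
  assert (Hed : 0 < eta ^ d) by (apply pow_lt; lra).
  set (e0 := eta ^ d / K).
  assert (He0 : 0 < e0) by (unfold e0; apply Rdiv_lt_0_compat; lra).
  destruct (C1 e0 He0) as [T1 H1]. destruct (C2 e0 He0) as [T2 H2]. destruct (CD e0 He0) as [T3 H3].
  exists (Rmax 1 (Rmax T1 (Rmax T2 T3))). intros t Ht.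
  pose proof (Rmax_l 1 (Rmax T1 (Rmax T2 T3))). pose proof (Rmax_r 1 (Rmax T1 (Rmax T2 T3))).
  pose proof (Rmax_l T1 (Rmax T2 T3)). pose proof (Rmax_r T1 (Rmax T2 T3)).
  pose proof (Rmax_l T2 T3). pose proof (Rmax_r T2 T3).
  specialize (H1 t ltac:(lra)). specialize (H2 t ltac:(lra)). specialize (H3 t ltac:(lra)).
  rewrite Rminus_0_r in H3.
  destruct (bb_props _ _ _ HS (S k) t ltac:(lra)) as [_ [_ B3]].
  destruct (bb_props _ _ _ HS k t ltac:(lra)) as [_ [B2 _]].
  assert (Eq : bb d lambda v (S k) t = -
     (lambda * (ee d lambda v (k - 1)%nat t - ee d lambda v k t) - bb d lambda v k t - DD d lambda v k t)).
  { unfold bb, ee, DD.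
    destruct (vstar_props d lambda Hd HL k) as [_ E1].
    destruct (vstar_props d lambda Hd HL (k - 1)) as [_ E2].
    replace (S (k - 1)) with k in E2 by lia. rewrite E1, E2. ring. }
  assert (Bnd : Rabs (bb d lambda v (S k) t) < eta ^ d).
  { rewrite Eq, Rabs_Ropp. unfold ee in *.
    assert (A1 : Rabs (lambda * (v (k - 1)%nat t - vstar d lambda (k - 1) - (v k t - vstar d lambda k))) <= lambda * e0 + lambda * e0).
    { rewrite Rabs_mult, (Rabs_right lambda) by lra. rewrite <- Rmult_plus_distr_l.
      apply Rmult_le_compat_l; [lra|]. eapply Rle_trans. apply Rabs_triang. rewrite Rabs_Ropp. lra. }
    assert (A2 : INR d * Rabs (v k t - vstar d lambda k) <= INR d * e0) by (apply Rmult_le_compat_l; lra).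
    assert (A3 : eta ^ d = K * e0) by (unfold e0; field; lra).
    eapply Rle_lt_trans. apply Rabs_triang. rewrite Rabs_Ropp.
    eapply Rle_lt_trans. apply Rplus_le_compat_r. apply Rabs_triang. rewrite Rabs_Ropp.
    unfold K in A3. lra. }
  apply Rnot_le_lt. intro Hn.
  assert (eta ^ d <= Rabs (ee d lambda v (S k) t) ^ d) by (apply pow_incr; unfold ee; lra).
  unfold ee in *. lra.
Qed.

Lemma conv_all d lambda v (HS : Sys d lambda v) k :
  conv (v k) (vstar d lambda k) /\ conv (v (S k)) (vstar d lambda (S k)).
Proof.
  induction k.
  - split; [|apply conv1; auto].
    intros eps He. exists 0. intros t Ht. rewrite (s_v0 _ _ _ HS) by lra. simpl.
    rewrite Rminus_diag, Rabs_R0. lra.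
  - destruct IHk as [C1 C2]. split; auto.
    apply (conv_step _ _ _ HS); [lia| |auto]. simpl. rewrite Nat.sub_0_r. auto.
Qed.

Theorem lemma3p1 (d : nat) (lambda : R) (v : nat -> R -> R)
  (Hd : (1 <= d)%nat)
  (Hlam : 0 < lambda < 1)
  (Hv0 : forall t, 0 <= t -> v 0%nat t = 1)
  (Hstate : forall t, 0 <= t -> in_U (fun k => v k t))
  (Hinit : in_Uo (fun k => v k 0))
  (Hcont0 : forall k, filterlim (v k) (at_right 0) (locally (v k 0)))
  (Hode : forall (k : nat) (t : R), (1 <= k)%nat -> 0 < t ->
     is_derive (v k) t
       (lambda * (v (k - 1)%nat t - v k t)
        - (1 - v (S k) t) ^ d + (1 - v k t) ^ d)) :
  forall k : nat, (1 <= k)%nat ->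
    is_lim (v k) p_infty (vstar d lambda k).
Proof.
  intros k Hk.
  assert (HS : Sys d lambda v) by (constructor; auto).
  destruct (conv_all _ _ _ HS k) as [C _].
  apply is_lim_spec. intros eps.
  destruct (C eps (cond_pos eps)) as [T HT].
  exists T. intros x Hx. apply HT. lra.
Qed.
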